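(* Assume the Continuum Hypothesis. Then there exists a topological space $Z$ which is sequentially separable and selectively separable but is not selectively sequentially separable.
   Context: A space is sequentially separable if it has a countable subset $D$ such that every point is the limit of a sequence from $D$ (a sequentially dense set). A space $Z$ is selectively separable if for every sequence $(D_n:n\in\mathbb{N})$ of dense subsets of $Z$ one can choose finite $F_n\subseteq D_n$ so that $\bigcup_n F_n$ is dense in $Z$. A space $Z$ is selectively sequentially separable if for every sequence $(D_n:n\in\mathbb{N})$ of sequentially dense subsets of $Z$ one can choose finite $F_n\subseteq D_n$ so that $\bigcup_n F_n$ is sequentially dense in $Z$. *)

(* Defs.v *)
From HB Require Import structures.
From mathcomp Require Import all_boot all_order all_algebra.
From mathcomp Require Import all_classical all_reals all_analysis.

Set Implicit Arguments.
Unset Strict Implicit.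
Unset Printing Implicit Defensive.

Local Open Scope classical_set_scope.

(* The Continuum Hypothesis: every set of cardinality at most the continuum
   2^aleph_0 = |P(N)| is countable or has the cardinality of the continuum.
   (Every subset of P(N) is countable or equipotent to P(N).) *)
Definition CH : Prop :=
  forall A : set (set nat), countable A \/ (A #= [set: set nat])%card.

Definition seq_dense (Z : topologicalType) (D : set Z) : Prop :=
  forall x : Z, exists u : nat -> Z, (forall n, D (u n)) /\ (u @ \oo --> x).

Definition seq_separable (Z : topologicalType) : Prop :=
  exists D : set Z, countable D /\ seq_dense D.

Definition selectively_separable (Z : topologicalType) : Prop :=
  forall Ds : nat -> set Z, (forall n, dense (Ds n)) ->
  exists Fs : nat -> set Z,
    (forall n, finite_set (Fs n) /\ Fs n `<=` Ds n) /\
    dense (\bigcup_n Fs n).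

Definition selectively_seq_separable (Z : topologicalType) : Prop :=
  forall Ds : nat -> set Z, (forall n, seq_dense (Ds n)) ->
  exists Fs : nat -> set Z,
    (forall n, finite_set (Fs n) /\ Fs n `<=` Ds n) /\
    seq_dense (\bigcup_n Fs n).

(* Main.v *)
Require Import Defs.
From HB Require Import structures.
From mathcomp Require Import all_boot all_order all_algebra.
From mathcomp Require Import all_classical all_reals all_analysis.
From mathcomp Require Import finmap.
Set Implicit Arguments. Unset Strict Implicit.
Local Open Scope classical_set_scope.

Inductive Z := ZP | ZC of nat & nat | ZA of nat & nat & nat.
Definition enc (z : Z) : option (nat * nat + nat * nat * nat) :=
  match z with ZP => None | ZC k j => Some (inl (k, j)) | ZA k j i => Some (inr (k, j, i)) end.
Definition dec (o : option (nat * nat + nat * nat * nat)) : Z :=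
  match o with None => ZP | Some (inl (k, j)) => ZC k j | Some (inr (k, j, i)) => ZA k j i end.
Lemma encK : cancel enc dec. Proof. by case. Qed.
HB.instance Definition _ := Countable.copy Z (can_type encK).
HB.instance Definition _ := isPointed.Build Z ZP.

Definition op (U : set Z) : Prop :=
  (U ZP -> exists f : nat -> nat, forall k j, (f k <= j)%N -> U (ZC k j)) /\
  (forall k j, U (ZC k j) -> exists N, forall i, (N <= i)%N -> U (ZA k j i)).

Lemma opT : op setT. Proof. by split=> *; [exists (fun=> 0%N)|exists 0%N]. Qed.
Lemma opI : setI_closed op.
Proof.
move=> A B [A1 A2] [B1 B2]; split.
  move=> [/A1 [f Hf] /B1 [g Hg]]; exists (fun k => maxn (f k) (g k)) => k j.
  by rewrite geq_max => /andP[??]; split; [apply: Hf|apply: Hg].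
move=> k j [/A2 [N HN] /B2 [M HM]]; exists (maxn N M) => i.
by rewrite geq_max => /andP[??]; split; [apply: HN|apply: HM].
Qed.
Lemma op_bigU (I : Type) (f : I -> set Z) : (forall i, op (f i)) -> op (\bigcup_i f i).
Proof.
move=> H; split.
  move=> [i _ Hi]; have [/(_ Hi) [g Hg] _] := H i.
  by exists g => k j /Hg ?; exists i.
move=> k j [i _ Hi]; have [_ /(_ _ _ Hi) [N HN]] := H i.
by exists N => m /HN ?; exists i.
Qed.
HB.instance Definition _ := isOpenTopological.Build Z opT opI op_bigU.

Lemma openZ (U : set Z) : open U <-> op U.
Proof.
rewrite openE; split.
- move=> oU; split.
    move=> /oU [B [[oB _] BP sB]].
    have [f Hf] := oB BP. by exists f => k j /Hf /sB.
  move=> k j /oU [B [[_ oB] BC sB]].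
  have [N HN] := oB _ _ BC. by exists N => i /HN /sB.
- move=> oU x Ux. by exists U; split.
Qed.

Lemma evP (P : nat -> Prop) : (\forall n \near \oo, P n) -> exists N, forall n, (N <= n)%N -> P n.
Proof. by move=> [N _ HN]; exists N => n /HN. Qed.
Lemma evP' (P : nat -> Prop) N : (forall n, (N <= n)%N -> P n) -> \forall n \near \oo, P n.
Proof. by move=> H; exists N. Qed.

Lemma cvgZ (u : nat -> Z) x : u @ \oo --> x <-> forall U, op U -> U x -> exists N, forall n, (N <= n)%N -> U (u n).
Proof.
split.
- move=> H U oU Ux. apply: evP. apply: H. by exists U; split.
- move=> H A [B [oB Bx sB]]. have [N HN] := H B oB Bx.
  by exists N => // n /= /HN /sB.
Qed.

Lemma op_hasA (O : set Z) x : op O -> O x -> exists k j i, O (ZA k j i).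
Proof.
move=> [H1 H2]; case: x => [|k j|k j i] Ox.
- have [f Hf] := H1 Ox. have := Hf 0%N (f 0%N) (leqnn _) => /H2 [N HN].
  by exists 0%N, (f 0%N), N; apply: HN.
- have [N HN] := H2 _ _ Ox. by exists k, j, N; apply: HN.
- by exists k, j, i.
Qed.

Lemma op_A k j i : op [set ZA k j i].
Proof. by split => [//|k' j' //]. Qed.

Definition DD (n : nat) : set Z := [set z | match z with ZP => False | ZC k _ => (n <= k)%N | ZA _ _ _ => True end].

Lemma DD_seq_dense n : seq_dense (DD n).
Proof.
case => [|k j|k j i].
- exists (fun j => ZC n j); split; [by move=> m; rewrite /DD /= | apply/cvgZ] => U [H1 _] /H1 [f Hf].
  by exists (f n) => m /Hf.
- exists (fun i => ZA k j i); split; [by [] | apply/cvgZ] => U [_ H2] /H2 [N HN].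
  by exists N.
- exists (fun=> ZA k j i); split; [by [] | apply/cvgZ] => U _ HU.
  by exists 0%N.
Qed.

Definition pj (z : Z) : nat := if z is ZC _ j then j else 0%N.

Lemma fin_bound (F : set Z) : finite_set F -> exists B, forall k j, F (ZC k j) -> (j < B)%N.
Proof.
move=> /finite_fsetP [X ->]; exists (\max_(z <- X) pj z).+1 => k j /= Hz.
rewrite ltnS; have := @leq_bigmax_seq _ (enum_fset X) xpredT pj (ZC k j) Hz isT; by [].
Qed.

Lemma tailfin (u : nat -> Z) k j H : exists N, forall i, (N <= i)%N -> forall m, (m < H)%N -> u m <> ZA k j i.
Proof.
elim: H => [|H [N HN]]; first by exists 0%N.
exists (maxn N (match u H with ZA k' j' i0 => i0.+1 | _ => 0 end))%N => i.
rewrite geq_max => /andP[Ni Hi] m; rewrite ltnS leq_eqVlt => /orP[/eqP ->|mH]; last exact: HN.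
move: Hi; case: (u H) => [|? ?|k' j' i0] Hi // [_ _ E].
by move: Hi; rewrite E ltnn.
Qed.

Theorem theorem4p1 :
  CH ->
  exists Z : topologicalType,
    seq_separable Z /\ selectively_separable Z /\ ~ selectively_seq_separable Z.
Proof.
move=> _; exists Z; split; [|split].
- exists setT; split; first exact: countableP.
  move=> x; exists (fun=> x); split => [//|]; apply/cvgZ => U _ Ux; by exists 0%N.
- move=> Ds Hd.
  pose e (n : nat) : Z := if (choice.unpickle n : option (nat * nat * nat)) is Some t then ZA t.1.1 t.1.2 t.2 else ZP.
  pose isA (z : Z) := if z is ZA _ _ _ then True else False.
  exists (fun n => [set z | z = e n /\ isA z]); split.
    move=> n; split.
      by apply: (@sub_finite_set _ _ [set e n]); [move=> z [->]|exact: finite_set1].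
    move=> z [-> ]; case: (e n) => [|? ?|k j i] //= _.
    have := Hd n [set ZA k j i] (ex_intro _ _ erefl).
    by move=> /(_ (proj2 (openZ _) (op_A k j i))) [z0 [-> ?]].
  move=> O [x Ox] /openZ oO; have [k [j [i Oi]]] := op_hasA oO Ox.
  exists (ZA k j i); split => //; exists (choice.pickle (k, j, i)) => //.
  by rewrite /e choice.pickleK.
- move=> /(_ DD DD_seq_dense) [Fs [HF /(_ ZP) [u [Su cu]]]].
  have {}cu := proj1 (cvgZ u ZP) cu.
  have /choice [B HB] : forall n, exists B, forall k j, Fs n (ZC k j) -> (j < B)%N.
    by move=> n; apply: fin_bound; case: (HF n).
  pose f (k : nat) := (\max_(n < k.+1) B n)%N.
  have Sb : forall n k j, u n = ZC k j -> (j < f k)%N.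
    move=> n k j E; have [m _ Fm] := Su n; rewrite E in Fm.
    have mk : (m < k.+1)%N by have := (proj2 (HF m)) _ Fm.
    apply: (leq_trans (HB m _ _ Fm)).
    exact: (@leq_bigmax _ (fun i : 'I_k.+1 => B i) (Ordinal mk)).
  have SP : forall n, u n <> ZP.
    by move=> n E; have [m _ Fm] := Su n; rewrite E in Fm; have := (proj2 (HF m)) _ Fm.
  have /choice [h Hh] : forall kj : nat * nat, exists M, forall n, (M <= n)%N -> forall i, u n <> ZA kj.1 kj.2 i.
    move=> [k j].
    pose U2 := [set z | match z with ZP => True | ZC k' j' => ~ (k' = k /\ j' = j) | ZA k' j' _ => ~ (k' = k /\ j' = j) end].
    have oU2 : op U2.
      split.
        move=> _; exists (fun k' => if k' == k then j.+1 else 0%N) => k' j' /=.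
        case: eqP => [-> Hj [_ E]|? _ [? _] //]; by move: Hj; rewrite E ltnn.
      by move=> k' j' /= H; exists 0%N.
    have [M HM] := cu U2 oU2 I.
    by exists M => n /HM + i E; rewrite E /=; apply.
  pose U3 := [set z | match z with ZP => True | ZC k j => (f k <= j)%N
     | ZA k j i => (f k <= j)%N /\ (forall m, (m < h (k, j))%N -> u m <> ZA k j i) end].
  have oU3 : op U3.
    split; first by move=> _; exists f.
    move=> k j /= fj; have [N HN] := tailfin u k j (h (k, j)).
    by exists N => i /HN.
  have [N HN] := cu U3 oU3 I.
  have := HN N (leqnn _); case E: (u N) => [|k j|k j i] /=.
  + by have := SP N; rewrite E.
  + by have := Sb N k j E; rewrite ltnNge => /negP.
  + move=> [_ Hm]; case: (ltnP N (h (k, j))) => [/Hm|/Hh /(_ i)]; by rewrite E.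
Qed.
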